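(* Let $G$ be a finite, simple, connected graph with at least $2$ vertices. Then $2 \le \mathrm{mob}(G) \le \mathrm{gp}(G)$. Moreover, for any integers $2 \le a \le b$ there exists a (finite, simple, connected) graph $G$ with $\mathrm{mob}(G) = a$ and $\mathrm{gp}(G) = b$.
   Context: All graphs are finite, simple and connected. A set $S$ of vertices of $G$ is a general position set if no three distinct vertices of $S$ lie on a common shortest path of $G$; $\mathrm{gp}(G)$ is the maximum size of a general position set. Mobile general position sets: place one robot on each vertex of a general position set $S$. Robots move one at a time; a move is legal if a robot moves from its vertex to an adjacent unoccupied vertex and the new set of occupied vertices is again a general position set. $S$ is a mobile general position set if there is a finite sequence of legal moves such that every vertex of $G$ is occupied by some robot at some moment (including the initial configuration). $\mathrm{mob}(G)$ is the maximum cardinality of a mobile general position set of $G$. *)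

(* Defs.v *)
From mathcomp Require Import all_boot.
From mathcomp Require Import boolp.
Set Implicit Arguments. Unset Strict Implicit. Unset Printing Implicit Defensive.

Definition simple_graph (T : finType) (e : rel T) : Prop :=
  symmetric e /\ irreflexive e.
Definition connected_graph (T : finType) (e : rel T) : Prop :=
  forall x y : T, connect e x y.

Definition shortest_path (T : finType) (e : rel T) (x : T) (p : seq T) : Prop :=
  path e x p /\
  forall q : seq T, path e x q -> last x q = last x p -> size p <= size q.

Definition gen_pos (T : finType) (e : rel T) (S : {set T}) : Prop :=
  forall u v w : T, u \in S -> v \in S -> w \in S ->
    u <> v -> v <> w -> u <> w ->
    ~ (exists (x : T) (p : seq T), shortest_path e x p /\
         u \in x :: p /\ v \in x :: p /\ w \in x :: p).

Definition legal_move (T : finType) (e : rel T) (S S' : {set T}) : Prop :=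
  exists u v : T, u \in S /\ v \notin S /\ e u v /\
    S' = v |: (S :\ u) /\ gen_pos e S'.

Definition mobile_gp (T : finType) (e : rel T) (S : {set T}) : Prop :=
  gen_pos e S /\
  exists s : seq {set T},
    (forall i, i < size s -> legal_move e (nth S (S :: s) i) (nth S s i)) /\
    (forall x : T, exists i, i <= size s /\ x \in nth S (S :: s) i).

Definition gp (T : finType) (e : rel T) : nat :=
  \max_(S : {set T} | `[< gen_pos e S >]) #|S|.

Definition mob (T : finType) (e : rel T) : nat :=
  \max_(S : {set T} | `[< mobile_gp e S >]) #|S|.

(* Main.v *)
Require Import Defs.
From mathcomp Require Import all_boot boolp zify.
Set Implicit Arguments. Unset Strict Implicit. Unset Printing Implicit Defensive.

Section Gen.
Variables (T : finType) (e : rel T).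

Fixpoint chain (S : {set T}) (s : seq {set T}) : Prop :=
  match s with [::] => True | S' :: s' => legal_move e S S' /\ chain S' s' end.

Lemma chain_nth S s : chain S s ->
  forall i, i < size s -> legal_move e (nth S (S :: s) i) (nth S s i).
Proof.
elim: s S => [|S' s IH] S //= [HL Hc] [|i] //= Hi.
have := IH _ Hc i Hi.
by rewrite (set_nth_default S S' Hi) (set_nth_default S S') //=; apply: ltnW.
Qed.

Lemma chain_cat S s1 s2 : chain S s1 -> chain (last S s1) s2 -> chain S (s1 ++ s2).
Proof. by elim: s1 S => [|S' s IH] S //= [H1 H2] H3; split => //; apply: IH. Qed.

Lemma mobile_of_chain S s : gen_pos e S -> chain S s ->
  (forall x, has (fun X : {set T} => x \in X) (S :: s)) -> mobile_gp e S.
Proof.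
move=> HS Hc Hh; split=> //; exists s; split; first exact: chain_nth.
move=> x; have /hasP [X HX xX] := Hh x.
exists (index X (S :: s)); split; last by rewrite nth_index.
by rewrite -ltnS; have := index_mem X (S :: s); rewrite HX.
Qed.

Lemma gen_pos2 a b : gen_pos e [set a; b].
Proof.
move=> u v w; rewrite !inE => /orP[]/eqP-> /orP[]/eqP-> /orP[]/eqP-> //.
Qed.

Lemma mob_le_gp : mob e <= gp e.
Proof.
apply/bigmax_leqP => S /asboolP [HS _].
by apply: (@leq_bigmax_cond _ (fun S => `[< gen_pos e S >])) => //; apply/asboolP.
Qed.

Hypothesis Hsimp : simple_graph e.

Lemma reach p : forall a b, path e a p -> a != b ->
  exists s, chain [set a; b] s /\
    exists y, last [set a; b] s = [set last a p; y] /\ last a p != y.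
Proof.
elim: p => [|c p IH] a b /=.
  by move=> _ ab; exists [::]; split => //; exists b.
move/andP=> [eac Hp] ab.
case: (eqVneq c b) => [cb|cb].
  subst c; have ba : b != a by rewrite eq_sym.
  have [s [Hc Hl]] := IH b a Hp ba.
  by exists s; rewrite setUC; split.
have [s [Hc Hl]] := IH c b Hp cb.
exists ([set c; b] :: s); split => //; split => //.
exists a, c; split => //; first by rewrite !inE eqxx.
have ca : c != a.
  by apply/eqP => ca; subst c; case: Hsimp => _ irr; rewrite irr in eac.
split; first by rewrite !inE negb_or ca.
split => //; split; last exact: gen_pos2.
apply/setP => x; rewrite !inE.
case: (eqVneq x a) => [->|xa] /=; first by rewrite eq_sym (negbTE ab) (negbTE ca).
by [].
Qed.

Hypothesis Hconn : connected_graph e.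

Lemma cover (xs : seq T) : forall a b, a != b ->
  exists s, chain [set a; b] s /\
   (forall x : T, x \in xs -> has (fun X : {set T} => x \in X) ([set a; b] :: s)) /\
   exists a' b', a' != b' /\ last [set a; b] s = [set a'; b'].
Proof.
elim: xs => [|x xs IH] a b ab.
  by exists [::]; split => //; split => //; exists a, b.
have /connectP [p Hp ->] := Hconn a x.
have [s1 [Hc1 [y [Hl1 Hy]]]] := reach Hp ab.
have [s2 [Hc2 [Hh2 Hl2]]] := IH _ _ Hy.
exists (s1 ++ s2); split.
  by apply: chain_cat => //; rewrite Hl1.
split; last by rewrite last_cat Hl1.
have Hlast : has (fun X : {set T} => last a p \in X) ([set a; b] :: s1).
  by apply/hasP; exists (last [set a; b] s1); [exact: mem_last | rewrite Hl1 !inE eqxx].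
move=> z; rewrite inE => /orP [/eqP->|zxs].
  by rewrite -[_ :: _ ++ _]cat_cons has_cat Hlast.
move: (Hh2 z zxs); rewrite -[_ :: s1 ++ s2]cat_cons has_cat /= => /orP [H|->]; last by rewrite !orbT.
apply/orP; left; have : has (fun X : {set T} => z \in X) ([set a; b] :: s1).
  by apply/hasP; exists (last [set a; b] s1); [exact: mem_last | rewrite Hl1].
by [].
Qed.

Lemma part1 : 1 < #|T| -> 2 <= mob e <= gp e.
Proof.
move=> /card_gt1P [a [b [_ _ ab]]].
rewrite mob_le_gp andbT.
have [s [Hc [Hh _]]] := cover (enum T) ab.
have HM : mobile_gp e [set a; b].
  apply: (@mobile_of_chain _ s (@gen_pos2 a b) Hc) => x; apply: Hh; exact: mem_enum.
have -> : 2 = #|[set a; b]| by rewrite cards2 ab.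
by apply: (@leq_bigmax_cond _ (fun S => `[< mobile_gp e S >])); apply/asboolP.
Qed.
End Gen.
Section Ex.
Variables (a b : nat).
Hypotheses (Ha : 2 <= a) (Hab : a <= b).
Notation V := ('I_b.+1).
Definition ge : rel V := fun i j =>
  (i != j) && [|| (nat_of_ord i == 0), (nat_of_ord j == 0) | (i < a) && (j < a)].
Definition c0 : V := ord0.

Lemma ge_simple : simple_graph ge.
Proof.
split; last by move=> i; rewrite /ge /= eqxx.
move=> i j; rewrite /ge /= eq_sym; congr andb.
by case: (nat_of_ord i == 0); case: (nat_of_ord j == 0); rewrite ?orbT //= andbC.
Qed.

Lemma ge0 i : i != c0 -> ge c0 i.
Proof. by move=> H; rewrite /ge /= eq_sym H. Qed.
Lemma ge0' i : i != c0 -> ge i c0.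
Proof. by move=> H; rewrite /ge /= H /= orbT. Qed.

Lemma ge_conn : connected_graph ge.
Proof.
move=> x y; case: (eqVneq x y) => [->|xy]; first exact: connect0.
case: (eqVneq x c0) => [E|x0]; first by subst x; apply: connect1; apply: ge0; rewrite eq_sym.
case: (eqVneq y c0) => [->|y0]; first by apply: connect1; apply: ge0'.
exact: (connect_trans (connect1 (ge0' x0)) (connect1 (ge0 y0))).
Qed.

Lemma diam x p : shortest_path ge x p -> size p <= 2.
Proof.
move=> [Hp Hs]; set y := last x p.
case: (eqVneq x y) => [xy|xy].
  by have := Hs [::] erefl xy; rewrite /= leqn0 => /eqP ->.
case Exy: (ge x y).
  by apply: (leq_trans (Hs [:: y] _ _)) => //=; rewrite Exy.
case: (eqVneq x c0) => [x0|x0].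
  by move: Exy; rewrite /ge /= xy x0 /=.
case: (eqVneq y c0) => [y0|y0].
  by move: Exy; rewrite /ge /= xy y0 /= orbT.
apply: (Hs [:: c0; y]) => //=; rewrite ge0' // ge0 //.
Qed.

Lemma gp_P3 S u v w : gen_pos ge S -> u \in S -> v \in S -> w \in S ->
  ge u v -> ge v w -> u != w -> ge u w.
Proof.
move=> HS uS vS wS uv vw uw; apply/negPn/negP => nuw.
have [_ irr] := ge_simple.
have uv' : u <> v by move=> E; subst; rewrite irr in uv.
have vw' : v <> w by move=> E; subst; rewrite irr in vw.
apply: (HS u v w uS vS wS uv' vw' (elimN eqP uw)).
exists u, [:: v; w]; split; last by rewrite !inE !eqxx !orbT.
split; first by rewrite /= uv vw.
move=> [|z [|z' q]] //=.
  by move=> _ E; rewrite -E eqxx in uw.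
by rewrite andbT => Hz E; rewrite -E Hz in nuw.
Qed.

Definition P3free (S : {set V}) := forall u v w, u \in S -> v \in S -> w \in S ->
  ge u v -> ge v w -> u != w -> ge u w.

Lemma P3_gp S : P3free S -> gen_pos ge S.
Proof.
move=> HS u v w uS vS wS uv vw uw [x [p [Hsp [Hu [Hv Hw]]]]].
have Hd := diam Hsp.
case: Hsp => Hp Hs.
case: p Hp Hs Hd Hu Hv Hw => [|y [|z [|t q]]] //= Hp Hs _.
- by rewrite !inE => /eqP Eu /eqP Ev _; apply: uv; rewrite Eu Ev.
- by rewrite !inE => /orP[]/eqP Eu /orP[]/eqP Ev /orP[]/eqP Ew; subst; congruence.
move: Hp => /and3P [xy yz _].
have xz : ge x z = false.
  apply/negP => H; have := Hs [:: z] _ erefl; rewrite /= H => /(_ isT) //.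
have nxz : x != z.
  apply/eqP => E; have := Hs [::] isT; rewrite /= E => /(_ erefl) //.
rewrite !inE => /or3P[]/eqP Eu /or3P[]/eqP Ev /or3P[]/eqP Ew; subst;
  try congruence.
all: by move: xz; rewrite (HS x y z).
Qed.

Lemma val0 (i : V) : (nat_of_ord i == 0) = (i == c0).
Proof. by case: i => [[|n] ?]. Qed.

Lemma noc0_gp (S : {set V}) : c0 \notin S -> gen_pos ge S.
Proof.
move=> H; apply: P3_gp => u v w uS vS wS; rewrite /ge /= !val0.
have u0 : u != c0 by apply: contraNneq H => <-.
have v0 : v != c0 by apply: contraNneq H => <-.
have w0 : w != c0 by apply: contraNneq H => <-.
rewrite (negbTE u0) (negbTE v0) (negbTE w0) /=.
by move=> /andP [_ /andP [-> _]] /andP [_ /andP [_ ->]] ->.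
Qed.

Lemma card_small (S : {set V}) : (forall i, i \in S -> i < a) -> #|S| <= a.
Proof.
move=> H; rewrite cardE -(size_map val) -[a](size_iota 0).
apply: uniq_leq_size; first by rewrite map_inj_uniq ?enum_uniq //; exact: val_inj.
move=> k /mapP [i]; rewrite mem_enum => iS ->.
by rewrite mem_iota /= add0n H.
Qed.

Lemma card_Qc : #|[set i : V | i < a]| = a.
Proof.
apply/eqP; rewrite eqn_leq card_small; last by move=> i; rewrite inE.
rewrite cardE -(size_map val) -[X in X <= _](size_iota 0 a).
apply: uniq_leq_size; first exact: iota_uniq.
move=> k; rewrite mem_iota add0n /= => Hk.
have Hk' : k < b.+1 by lia.
apply/mapP; exists (Ordinal Hk') => //.
by rewrite mem_enum inE.
Qed.

Lemma c0_bound (S : {set V}) : gen_pos ge S -> c0 \in S -> #|S| <= a.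
Proof.
move=> HS H0.
case: (boolP [exists x in S, a <= x]) => [/existsP [x /andP [xS ax]]|].
  have xn0 : x != c0 by apply/eqP => E; subst x; move: ax Ha; rewrite /= leqn0 => /eqP ->.
  apply: (@leq_trans #|[set x; c0]|); last by rewrite cards2; case: (_ != _); lia.
  apply: subset_leq_card; apply/subsetP => y yS; rewrite !inE.
  case: (eqVneq y x) => //= yx; apply/negPn/negP => y0.
  have := gp_P3 HS xS H0 yS (ge0' xn0) (ge0 y0).
  rewrite eq_sym yx /ge /= !val0 (negbTE xn0) (negbTE y0) /= => /(_ isT).
  rewrite eq_sym yx /=; move/andP => [? ?]; lia.
move/existsPn => Hn; apply: card_small => i iS.
by move: (Hn i); rewrite iS /= -ltnNge.
Qed.

Lemma legal_card (S S' : {set V}) : legal_move ge S S' -> gen_pos ge S' /\ #|S'| = #|S|.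
Proof.
move=> [u [v [uS [vS [_ [-> Hg]]]]]]; split => //.
rewrite cardsU1 (cardsD1 u S) uS.
have -> : v \notin S :\ u by rewrite !inE negb_and vS orbT.
by [].
Qed.

Definition Qc : {set V} := [set i : V | i < a].
Definition fx (x : V) : {set V} := x |: (Qc :\ c0).

Lemma Qc_gp : gen_pos ge Qc.
Proof.
apply: P3_gp => u v w; rewrite !inE => ua _ wa _ _ uw.
by rewrite /ge /= uw ua wa !orbT.
Qed.

Lemma c0Qc : c0 \in Qc.
Proof. by rewrite inE /=; lia. Qed.

Lemma move1 (x : V) : a <= x -> legal_move ge Qc (fx x).
Proof.
move=> ax; have xn0 : x != c0 by apply/eqP => E; subst x; move: ax Ha; rewrite /= leqn0 => /eqP ->.
exists c0, x; split; first exact: c0Qc.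
split; first by rewrite inE -leqNgt.
split; first exact: ge0.
split => //; apply: noc0_gp; by rewrite !inE eqxx eq_sym (negbTE xn0).
Qed.

Lemma move2 (x : V) : a <= x -> legal_move ge (fx x) Qc.
Proof.
move=> ax; have xn0 : x != c0 by apply/eqP => E; subst x; move: ax Ha; rewrite /= leqn0 => /eqP ->.
exists x, c0; split; first by rewrite !inE eqxx.
split; first by rewrite !inE eqxx eq_sym (negbTE xn0).
split; first exact: ge0'.
split; last exact: Qc_gp.
apply/setP => i; rewrite !inE.
case: (eqVneq i c0) => [->|i0] /=; first by rewrite /= ltnNge leqn0; move: Ha; case: a.
case: (eqVneq i x) => [->|ix] /=; last by [].
by rewrite ltnNge ax.
Qed.

Lemma gp_eq : gp ge = b.
Proof.
apply/eqP; rewrite eqn_leq; apply/andP; split.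
  apply/bigmax_leqP => S /asboolP HS.
  case: (boolP (c0 \in S)) => H; first exact: leq_trans (c0_bound HS H) Hab.
  apply: (@leq_trans #|[set~ c0]|); last by rewrite cardsC1 card_ord.
  apply: subset_leq_card; apply/subsetP => y yS; rewrite !inE.
  by apply: contraNneq H => <-.
apply: (@leq_trans #|[set~ c0]|); first by rewrite cardsC1 card_ord.
apply: (@leq_bigmax_cond _ (fun S => `[< gen_pos ge S >])); apply/asboolP.
by apply: noc0_gp; rewrite !inE eqxx.
Qed.

Lemma chain_leaves (xs : seq V) : all (fun x : V => a <= x) xs ->
  chain ge Qc (flatten [seq [:: fx x; Qc] | x <- xs]).
Proof.
elim: xs => [|x xs IH] //= /andP [ax Hxs].
by split; [exact: move1 | split; [exact: move2 | exact: IH]].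
Qed.

Lemma in_leaves (xs : seq V) x : x \in xs ->
  fx x \in flatten [seq [:: fx x; Qc] | x <- xs].
Proof.
elim: xs => [|y xs IH] //=; rewrite inE => /orP [/eqP ->|H].
  by rewrite !inE eqxx.
by rewrite !inE IH ?orbT.
Qed.

Lemma mob_eq : mob ge = a.
Proof.
apply/eqP; rewrite eqn_leq; apply/andP; split.
  apply/bigmax_leqP => S /asboolP [HS [s [Hm Hc]]].
  have Hall : forall i, i <= size s ->
      gen_pos ge (nth S (S :: s) i) /\ #|nth S (S :: s) i| = #|S|.
    elim => [|i IH] Hi //=.
    have [Hg Hcd] := IH (ltnW Hi).
    have [Hg' Hcd'] := legal_card (Hm i Hi).
    by split => //; rewrite Hcd'.
  have [i [Hi Hin]] := Hc c0.
  have [Hg Hcd] := Hall i Hi.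
  by rewrite -Hcd; exact: c0_bound Hg Hin.
rewrite -[X in X <= _]card_Qc.
apply: (@leq_bigmax_cond _ (fun S => `[< mobile_gp ge S >])); apply/asboolP.
pose xs := [seq x <- enum V | a <= nat_of_ord x].
apply: (@mobile_of_chain _ _ _ (flatten [seq [:: fx x; Qc] | x <- xs]) Qc_gp).
  by apply: chain_leaves; rewrite all_filter; apply/allP => x _; apply/implyP.
move=> x; case: (ltnP x a) => ax.
  by rewrite /= inE ax.
apply/hasP; exists (fx x); first by rewrite inE in_leaves ?orbT // mem_filter ax mem_enum.
by rewrite !inE eqxx.
Qed.
End Ex.

Theorem lemma1p1 :
  (forall (T : finType) (e : rel T),
      simple_graph e -> connected_graph e -> 1 < #|T| ->
      2 <= mob e <= gp e) /\
  (forall a b : nat, 2 <= a -> a <= b ->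
      exists (T : finType) (e : rel T),
        simple_graph e /\ connected_graph e /\ mob e = a /\ gp e = b).
Proof.
split; first by move=> T e Hs Hc HT; exact: part1.
move=> a b Ha Hab; exists 'I_b.+1, (@ge a b); split; first exact: ge_simple.
split; first exact: ge_conn.
by split; [exact: mob_eq | exact: gp_eq].
Qed.
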